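(* Let $d,r$ be positive integers, $n=dr$, and let $\gamma\in\mathcal S_n$ have cycle structure $d^r$. Suppose $(\varepsilon,\varepsilon,\gamma;(123))\in\mathrm{Par}(n)$. Then: <ul> <li>(i) if $3\mid d$ then $3\mid r$;</li> <li>(ii) if $6\mid d$ then $6\mid r$.</li> </ul>
   Context: A Latin square of order $n$ is an $n\times n$ array with rows, columns and symbols indexed by $[n]$, each symbol occurring once in each row and each column, with triple set $O(L)$. Permutations act on the right; $\varepsilon$ is the identity. A paratopism $(\alpha,\beta,\gamma;(123))$ maps $L$ to $L^\sigma$ with triple set $\{(z\gamma,x\alpha,y\beta):(x,y,z)\in O(L)\}$; it is an autoparatopism of $L$ if $L^\sigma=L$. $\mathrm{Par}(n)$ is the set of paratopisms that are autoparatopisms of at least one Latin square of order $n$. *)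

(* Defs.v *)
From HB Require Import structures.
From mathcomp Require Import all_boot all_order all_fingroup.
Set Implicit Arguments. Unset Strict Implicit. Unset Printing Implicit Defensive.

Definition is_latin (n : nat) (L : 'I_n -> 'I_n -> 'I_n) : Prop :=
  (forall x, injective (L x)) /\ (forall y, injective (fun x => L x y)).

Definition triples (n : nat) (L : 'I_n -> 'I_n -> 'I_n) : {set 'I_n * 'I_n * 'I_n} :=
  [set t : 'I_n * 'I_n * 'I_n | L t.1.1 t.1.2 == t.2].

(* Image of O(L) under the paratopism (alpha,beta,gamma;(123)):
   {(z gamma, x alpha, y beta) : (x,y,z) in O(L)}; permutations act on the
   right, so "x alpha" is the value of alpha at x. *)
Definition para123_image (n : nat) (alpha beta gamma : 'S_n)
  (L : 'I_n -> 'I_n -> 'I_n) : {set 'I_n * 'I_n * 'I_n} :=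
  [set ((gamma t.2, alpha t.1.1), beta t.1.2) | t in triples L].

Definition autopara123 (n : nat) (alpha beta gamma : 'S_n)
  (L : 'I_n -> 'I_n -> 'I_n) : Prop :=
  para123_image alpha beta gamma L = triples L.

Definition in_Par123 (n : nat) (alpha beta gamma : 'S_n) : Prop :=
  exists L : 'I_n -> 'I_n -> 'I_n, is_latin L /\ autopara123 alpha beta gamma L.

(* Main.v *)
Require Import Defs.
From mathcomp Require Import all_boot all_order all_fingroup zify.
Set Implicit Arguments. Unset Strict Implicit. Unset Printing Implicit Defensive.

Lemma iter_mod (T : Type) (f : T -> T) d y m : iter d f y = y -> iter m f y = iter (m %% d) f y.
Proof.
move=> Hd; rewrite {1}(divn_eq m d) addnC iterD; congr iter.
elim: (m %/ d) => [|q IH]; first by rewrite mul0n.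
by rewrite mulSn iterD IH Hd.
Qed.

Lemma exists_pos n d (g : 'S_n) : 0 < d -> (forall x, #|porbit g x| = d) ->
  exists pos : 'I_n -> nat, (forall x, pos x < d) /\ (forall x, pos (g x) = (pos x + 1) %% d).
Proof.
move=> d0 H.
pose rep x := odflt x [pick y in porbit g x].
have repP x : rep x \in porbit g x.
  by rewrite /rep; case: pickP => [y //|/(_ x)]; rewrite porbit_id.
have pg x : porbit g (g x) = porbit g x by have := porbit_perm g 1 x; rewrite expg1.
have repS x : rep (g x) = rep x.
  rewrite /rep pg; case: pickP => [y //|/(_ x)]; by rewrite porbit_id.
have orb x : porbit g (rep x) = porbit g x by apply/eqP; rewrite eq_porbit_mem repP.
have xin x : x \in traject g (rep x) d.
  by rewrite -(H (rep x)) -porbit_traject orb porbit_id.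
have un x : uniq (traject g (rep x) d) by rewrite -(H (rep x)) uniq_traject_porbit.
exists (fun x => index x (traject g (rep x) d)); split.
  by move=> x; rewrite -[X in _ < X](size_traject g (rep x) d) index_mem.
move=> x; rewrite repS.
set k := index x _.
have kd : k < d by rewrite -[X in _ < X](size_traject g (rep x) d) index_mem.
have ex : x = iter k g (rep x) by rewrite -(nth_traject _ kd) nth_index.
have Hd : iter d g (rep x) = rep x by rewrite -{1}(H (rep x)) iter_porbit.
have -> : g x = iter ((k + 1) %% d) g (rep x) by rewrite -iter_mod // addn1 iterS -ex.
rewrite -(nth_traject g (ltn_pmod (k+1) d0)) index_uniq //.
by rewrite size_traject ltn_pmod.
Qed.

Section Avg.
Variables (n d : nat) (g : 'S_n) (pos : 'I_n -> nat).
Hypothesis d_gt0 : 0 < d.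
Hypothesis pos_lt : forall x, pos x < d.
Hypothesis posS : forall x, pos (g x) = (pos x + 1) %% d.

Lemma posX k x : pos ((g ^+ k)%g x) = (pos x + k) %% d.
Proof.
elim: k => [|k IH]; first by rewrite expg0 perm1 addn0 modn_small.
by rewrite expgSr permM posS IH modnDml addn1 addnS.
Qed.

Lemma invX (T : Type) (rho : 'I_n -> T) k x : (forall x, rho (g x) = rho x) -> rho ((g ^+ k)%g x) = rho x.
Proof. move=> Hr; elim: k => [|k IH]; first by rewrite expg0 perm1.
by rewrite expgSr permM Hr IH. Qed.

Lemma pos_class j (rho : 'I_n -> nat) : j < d -> (forall x, rho (g x) = rho x) ->
  \sum_(x | pos x == j) rho x = \sum_(x | pos x == 0) rho x.
Proof.
move=> jd Hr; rewrite [LHS](reindex_inj (@perm_inj _ (g ^+ j)%g)) /=.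
apply: eq_big => x; last by move=> _; rewrite invX.
move: (pos_lt x); rewrite posX => px.
case: (ltnP (pos x + j) d) => h.
  by rewrite modn_small //; apply/eqP/eqP; lia.
have -> : pos x + j = (pos x + j - d) + d by lia.
by rewrite modnDr modn_small; [apply/eqP/eqP; lia | lia].
Qed.

Lemma avg (rho : 'I_n -> nat) : (forall x, rho (g x) = rho x) ->
  \sum_x rho x = d * \sum_(x | pos x == 0) rho x.
Proof.
move=> Hr.
rewrite (partition_big (fun x => Ordinal (pos_lt x)) xpredT) //=.
rewrite (eq_bigr (fun _ => \sum_(x | pos x == 0) rho x)).
  by rewrite sum_nat_const card_ord.
move=> j _; rewrite -(pos_class (ltn_ord j) Hr); apply: eq_bigl => x.
by [].
Qed.

Lemma avg2 (f : 'I_n -> 'I_n -> nat) : (forall x y, f (g x) (g y) = f x y) ->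
  \sum_x \sum_y f x y = d * \sum_(x | pos x == 0) \sum_y f x y.
Proof.
move=> Hf; apply: avg => x.
by rewrite [LHS](reindex_inj (@perm_inj _ g)) /=; apply: eq_bigr => y _; rewrite Hf.
Qed.

Definition c0 := #|[pred x | pos x == 0]|.

Lemma n_eq : n = d * c0.
Proof.
have := avg (rho := fun _ => 1) (fun _ => erefl).
by rewrite sum1_card card_ord sum1_card.
Qed.

Lemma sum_pos : \sum_x pos x = c0 * \sum_(j < d) j.
Proof.
rewrite (partition_big (fun x => Ordinal (pos_lt x)) xpredT) //= big_distrr /=.
apply: eq_bigr => j _.
rewrite (eq_bigr (fun _ => val j)); last by move=> x /eqP <-.
rewrite sum_nat_const; congr (_ * _).
have := pos_class (rho := fun _ => 1) (ltn_ord j) (fun _ => erefl).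
rewrite !sum1_card /c0 => <-; apply: eq_card => x.
by [].
Qed.

End Avg.

Lemma sumj d : (\sum_(j < d) j) * 2 = d * d.-1.
Proof.
elim: d => [|d IH]; first by rewrite big_ord0.
rewrite big_ord_recr /= mulnDl IH; case: d {IH} => [|d] /=; nia.
Qed.

Lemma arith_i d c S K : 0 < d -> S * 2 = d * d.-1 -> 3 * (d * K) = (d * c) * (d * c) ->
  d %| c * (c * S) + K -> 3 %| c.
Proof.
move=> d0 hS hK /dvdnP [m hm].
have hK' : 3 * K = d * (c * c).
  by apply/eqP; rewrite -(eqn_pmul2l d0); apply/eqP; nia.
have h6 : 6 * m = c * c * (3 * d - 1).
  apply/eqP; rewrite -(eqn_pmul2l d0); apply/eqP.
  case: d d0 hS hK hK' hm => [//|e] _ /= hS hK hK' hm.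
  nia.
have : 3 %| c * c * (3 * d - 1) by rewrite -h6 dvdn_mulr.
rewrite Euclid_dvdM // Euclid_dvdM // orbb.
case/orP => // h.
have : 3 %| 3 * d by rewrite dvdn_mulr.
move: h; case: d d0 {hS hK hK' hm h6} => [//|e] _ h1 h2.
have : 3 %| 3 * e.+1 - (3 * e.+1 - 1) by rewrite dvdn_sub.
by have -> : 3 * e.+1 - (3 * e.+1 - 1) = 1 by lia.
Qed.

Lemma arith_ii d c S : 0 < d -> S * 2 = d * d.-1 -> 2 %| d -> d %| c * (c * S) -> 2 %| c.
Proof.
move=> d0 hS h2 /dvdnP [m hm].
have h : 2 * m = c * c * d.-1.
  apply/eqP; rewrite -(eqn_pmul2l d0); apply/eqP; nia.
have : 2 %| c * c * d.-1 by rewrite -h dvdn_mulr.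
rewrite Euclid_dvdM // Euclid_dvdM // orbb; case/orP => // h'.
have : 2 %| d - d.-1 by rewrite dvdn_sub.
by have -> : d - d.-1 = 1 by lia.
Qed.

Section Main.
Variables (n d : nat) (g : 'S_n) (pos : 'I_n -> nat) (L : 'I_n -> 'I_n -> 'I_n).
Hypothesis d_gt0 : 0 < d.
Hypothesis pos_lt : forall x, pos x < d.
Hypothesis posS : forall x, pos (g x) = (pos x + 1) %% d.
Hypothesis Lrow : forall x, injective (L x).
Hypothesis Lcol : forall y, injective (fun x => L x y).
Hypothesis HL : forall x y, L (g (L x y)) x = y.

Lemma HL2 x y : L (g y) (g (L x y)) = x.
Proof. by have := HL (g (L x y)) x; rewrite (HL x y). Qed.

Lemma Lauto x y : L (g x) (g y) = g (L x y).
Proof. by have := HL (g y) (g (L x y)); rewrite (HL2 x y). Qed.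

Definition diff a b := (pos b + d - pos a) %% d.

Lemma diffE a b : diff a b = if pos a <= pos b then pos b - pos a else pos b + d - pos a.
Proof.
rewrite /diff; move: (pos_lt a) (pos_lt b) => ha hb; case: ifP => h.
  have -> : pos b + d - pos a = (pos b - pos a) + d by lia.
  by rewrite modnDr modn_small //; lia.
by rewrite modn_small //; lia.
Qed.

Lemma posS' x : pos (g x) = if pos x + 1 == d then 0 else pos x + 1.
Proof.
rewrite posS; move: (pos_lt x) => h; case: ifP => /eqP e; first by rewrite e modnn.
by rewrite modn_small //; lia.
Qed.

Lemma posSc x : (pos x + 1 = d /\ pos (g x) = 0) \/ (pos x + 1 < d /\ pos (g x) = pos x + 1).
Proof. rewrite posS'; move: (pos_lt x) => h; case: ifP => /eqP e; lia. Qed.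

Lemma diffG a b : diff (g a) (g b) = diff a b.
Proof.
rewrite !diffE; move: (pos_lt a) (pos_lt b) (posSc a) (posSc b) => ha hb.
repeat (case: ifP => /= ?); try lia.
Qed.

Lemma G1 x y : (diff x y + diff (g (L x y)) x + diff y (L x y) + 1 = d) \/
               (diff x y + diff (g (L x y)) x + diff y (L x y) + 1 = d * 2).
Proof.
rewrite !diffE; move: (pos_lt x) (pos_lt y) (pos_lt (L x y)) (posSc (L x y)) => ha hb hc.
repeat (case: ifP => /= ?); try lia.
Qed.

Lemma UVW x y z : (diff x y + diff y z + diff z x = 0) \/ (diff x y + diff y z + diff z x = d)
   \/ (diff x y + diff y z + diff z x = d * 2).
Proof.
rewrite !diffE; move: (pos_lt x) (pos_lt y) (pos_lt z) => ha hb hc.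
repeat (case: ifP => /= ?); try lia.
Qed.

Lemma UW x z : (diff x z + diff z x = 0) \/ (diff x z + diff z x = d).
Proof.
rewrite !diffE; move: (pos_lt x) (pos_lt z) => ha hc.
repeat (case: ifP => /= ?); try lia.
Qed.

Lemma sum_sig (F : 'I_n -> 'I_n -> nat) :
  \sum_x \sum_y F x y = \sum_x \sum_y F (g (L x y)) x.
Proof.
rewrite !pair_bigA /=.
have inj : injective (fun p : 'I_n * 'I_n => (g (L p.1 p.2), p.1)).
  move=> [a b] [a' b'] /= [] /perm_inj e e'; subst a'.
  by rewrite (Lrow e).
by rewrite (reindex_inj inj).
Qed.


Lemma sum2_split (F H : 'I_n -> 'I_n -> nat) :
  \sum_x \sum_y (F x y + H x y) = \sum_x \sum_y F x y + \sum_x \sum_y H x y.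
Proof. by rewrite -big_split; apply: eq_bigr => x _; rewrite big_split. Qed.

Lemma part_ii : 2 %| d -> 2 %| c0 pos.
Proof.
move=> h2.
have hc := sum_pos d_gt0 pos_lt posS.
set c := c0 pos in hc *.
set Q := \sum_(x | pos x == 0) \sum_y diff x y.
have hQ : Q = c * (c * \sum_(j < d) j).
  rewrite /Q (eq_bigr (fun _ => c * \sum_(j < d) j)) ?sum_nat_const //.
  move=> x /eqP px; rewrite -hc; apply: eq_bigr => y _; rewrite diffE px /= subn0 //.
have hU : \sum_x \sum_y diff x y = d * Q by apply: (avg2 d_gt0 pos_lt posS) => x y; apply: diffG.
have hV : \sum_(x | pos x == 0) \sum_y diff y (L x y) = Q.
  apply/eqP; rewrite -(eqn_pmul2l d_gt0); apply/eqP.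
  rewrite -(avg2 d_gt0 pos_lt posS (f := fun x y => diff y (L x y))); last first.
    by move=> x y; rewrite Lauto diffG.
  rewrite -hU exchange_big /=; apply: eq_bigr => y _.
  by rewrite [RHS](reindex_inj (Lcol (y := y))).
have hW : \sum_(x | pos x == 0) \sum_y diff x (L x y) = Q.
  by apply: eq_bigr => x _; rewrite [RHS](reindex_inj (@Lrow x)).
have d1 : d %| Q + \sum_(x | pos x == 0) \sum_y diff y (L x y)
              + \sum_(x | pos x == 0) \sum_y diff (L x y) x.
  rewrite -!big_split /=; apply: dvdn_sum => x _; rewrite -!big_split /=.
  apply: dvdn_sum => y _; case: (UVW x y (L x y)) => [->|[->|->]] //.
  by rewrite dvdn_mulr.
have d2 : d %| \sum_(x | pos x == 0) \sum_y diff x (L x y)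
              + \sum_(x | pos x == 0) \sum_y diff (L x y) x.
  rewrite -!big_split /=; apply: dvdn_sum => x _; rewrite -!big_split /=.
  by apply: dvdn_sum => y _; case: (UW x (L x y)) => ->.
rewrite hV hW in d1 d2.
have dQ : d %| Q by move: d1; rewrite -addnA addnC dvdn_addr // addnC.
by apply: (arith_ii d_gt0 (sumj d) h2); rewrite -hQ.
Qed.


Definition k3 x y := (pos x + pos y + pos (L x y)) %% 3.

Section Three.
Hypothesis h3 : 3 %| d.

Lemma k3G x y : k3 (g x) (g y) = k3 x y.
Proof.
rewrite /k3 Lauto; move: (posSc x) (posSc y) (posSc (L x y)) h3 => a b c /dvdnP [e he].
lia.
Qed.

Lemma k3S x y : k3 (g (L x y)) x = (k3 x y + 1) %% 3.
Proof.
rewrite /k3 HL; move: (posSc (L x y)) h3 => c /dvdnP [e he].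
lia.
Qed.

Lemma k3SS x y : k3 (g y) (g (L x y)) = (k3 x y + 2) %% 3.
Proof.
rewrite /k3 HL2; move: (posSc y) (posSc (L x y)) h3 => b c /dvdnP [e he].
lia.
Qed.

Lemma shift1 (F : 'I_n -> 'I_n -> nat) :
  \sum_x \sum_y (k3 x y == 1) * F x y = \sum_x \sum_y (k3 x y == 0) * F (g (L x y)) x.
Proof.
rewrite sum_sig; apply: eq_bigr => x _; apply: eq_bigr => y _; rewrite k3S.
congr (nat_of_bool _ * _); have := ltn_pmod (pos x + pos y + pos (L x y)) (isT : 0 < 3).
rewrite -/(k3 x y) => ?; apply/eqP/eqP; lia.
Qed.

Lemma shift2 (F : 'I_n -> 'I_n -> nat) :
  \sum_x \sum_y (k3 x y == 2) * F x y = \sum_x \sum_y (k3 x y == 0) * F (g y) (g (L x y)).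
Proof.
rewrite sum_sig sum_sig; apply: eq_bigr => x _; apply: eq_bigr => y _; rewrite (HL x y) k3SS.
congr (nat_of_bool _ * _); have := ltn_pmod (pos x + pos y + pos (L x y)) (isT : 0 < 3).
rewrite -/(k3 x y) => ?; apply/eqP/eqP; lia.
Qed.

Lemma split3 (F : 'I_n -> 'I_n -> nat) :
  \sum_x \sum_y F x y = \sum_x \sum_y (k3 x y == 0) * F x y
    + \sum_x \sum_y (k3 x y == 1) * F x y + \sum_x \sum_y (k3 x y == 2) * F x y.
Proof.
rewrite -!sum2_split; apply: eq_bigr => x _; apply: eq_bigr => y _.
rewrite -!mulnDl; have := ltn_pmod (pos x + pos y + pos (L x y)) (isT : 0 < 3).
rewrite -/(k3 x y); case: (k3 x y) => [|[|[|]]] //= _; by rewrite mul1n.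
Qed.

Lemma part_i : 3 %| c0 pos.
Proof.
have hc := sum_pos d_gt0 pos_lt posS.
have nE := n_eq d_gt0 pos_lt posS.
set c := c0 pos in hc nE *.
set Q := \sum_(x | pos x == 0) \sum_y diff x y.
have hQ : Q = c * (c * \sum_(j < d) j).
  rewrite /Q (eq_bigr (fun _ => c * \sum_(j < d) j)) ?sum_nat_const //.
  move=> x /eqP px; rewrite -hc; apply: eq_bigr => y _; rewrite diffE px /= subn0 //.
have hU : \sum_x \sum_y diff x y = d * Q by apply: (avg2 d_gt0 pos_lt posS) => x y; apply: diffG.
pose G x y := diff x y + diff (g (L x y)) x + diff y (L x y).
set X := \sum_(x | pos x == 0) \sum_y (k3 x y == 0) * G x y.
have h1 : \sum_x \sum_y (k3 x y == 0) * G x y = d * X.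
  apply: (avg2 d_gt0 pos_lt posS) => x y.
  by rewrite /G k3G Lauto !diffG.
have h2 : \sum_x \sum_y (k3 x y == 0) * G x y = \sum_x \sum_y diff x y.
  rewrite [RHS]split3 shift1 shift2 -!sum2_split; apply: eq_bigr => x _; apply: eq_bigr => y _.
  by rewrite /G !mulnDr diffG.
have hX : X = Q by apply/eqP; rewrite -(eqn_pmul2l d_gt0) -h1 h2 hU.
set K := \sum_(x | pos x == 0) \sum_y (k3 x y == 0 : nat).
have hK1 : \sum_x \sum_y (k3 x y == 0 : nat) = d * K.
  by apply: (avg2 d_gt0 pos_lt posS) => x y; rewrite k3G.
have hK2 : 3 * (d * K) = n * n.
  have e : \sum_(x : 'I_n) \sum_(y : 'I_n) (1 : nat) = n * n.
    rewrite (eq_bigr (fun _ : 'I_n => n)) => [|x _]; first by rewrite sum_nat_const card_ord.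
    by rewrite sum_nat_const card_ord muln1.
  rewrite -e split3 shift1 shift2 -hK1.
  have E : forall F : 'I_n -> 'I_n -> nat, \sum_x \sum_y F x y = \sum_x \sum_y F x y * 1.
    by move=> F; apply: eq_bigr => x _; apply: eq_bigr => y _; rewrite muln1.
  by rewrite -!E; lia.
have hd : d %| X + K.
  rewrite -big_split /=; apply: dvdn_sum => x _; rewrite -big_split /=.
  apply: dvdn_sum => y _; rewrite -[X in _ + X]muln1 -mulnDr; apply: dvdn_mull.
  by rewrite /G; case: (G1 x y) => ->; rewrite ?dvdn_mulr.
apply: (arith_i d_gt0 (sumj d) (K := K)); first by rewrite hK2 nE.
by rewrite -hQ -hX.
Qed.

End Three.
End Main.

Theorem theorem5p2 (d r : nat) (gamma : 'S_(d * r)) :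
  0 < d -> 0 < r ->
  (forall x : 'I_(d * r), #|porbit gamma x| = d) ->
  #|porbits gamma| = r ->
  in_Par123 1 1 gamma ->
  (3 %| d -> 3 %| r) /\ (6 %| d -> 6 %| r).
Proof.
move=> d0 r0 Horb _ [L [[Lrow Lcol] Hp]].
have HL : forall x y, L (gamma (L x y)) x = y.
  move=> x y.
  have m : (x, y, L x y) \in triples L by rewrite inE.
  have : ((gamma (L x y), (1%g : 'S_(d * r)) x), (1%g : 'S_(d * r)) y) \in para123_image 1%g 1%g gamma L.
    exact: (imset_f (fun t : 'I_(d * r) * 'I_(d * r) * 'I_(d * r) =>
                       ((gamma t.2, (1%g : 'S_(d * r)) t.1.1), (1%g : 'S_(d * r)) t.1.2)) m).
  by rewrite Hp inE /= !perm1 => /eqP.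
have [pos [pos_lt posS]] := exists_pos d0 Horb.
have cr : c0 pos = r.
  have := n_eq d0 pos_lt posS; move/eqP; rewrite eqn_pmul2l // => /eqP <-. by [].
have p1 : 3 %| d -> 3 %| r by move=> h3; rewrite -cr; exact: (part_i d0 pos_lt posS Lrow HL h3).
split => // h6.
have h2 : 2 %| d by apply: dvdn_trans h6.
have h3 : 3 %| d by apply: dvdn_trans h6.
have q2 : 2 %| r by rewrite -cr; exact: (part_ii d0 pos_lt posS Lrow Lcol HL h2).
have q3 := p1 h3.
by rewrite (@Gauss_dvd 2 3) ?q2.
Qed.
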